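(* For every vertex $t\in\mathbb T_n$, $\tilde G_t\tilde B_t=\tilde B_{t_0}C_t$.
   Context: $m\ge n\ge1$, $[b]_+=\max(b,0)$. $\mathbb T_n$ is the $n$-regular tree with edges labeled $1,\dots,n$, distinct labels at each vertex; $t\overset{k}{-}t'$ denotes an edge labeled $k$; $t_0$ a root. Fix positive integers $r_1,\dots,r_n$, $R=\mathrm{diag}(r_1,\dots,r_n)$, and an integer $m\times n$ matrix $\tilde B=(b_{ij})$ whose top $n\times n$ part $B$ is skew-symmetrizable (in the paper $\tilde B$ is part of a compatible pair $(\tilde B,\Lambda)$ of an $(R,\mathbf h)$-quantum seed). Assign matrices $\tilde B_t=(b_{ij;t})$ ($m\times n$) with $\tilde B_{t_0}=\tilde B$ and, for $t\overset{k}{-}t'$, $\tilde B_{t'}=E\tilde B_tF$ where $E$ is the $m\times m$ identity with $k$-th column replaced by $-1$ at position $k$ and $[-\varepsilon b_{ik;t}r_k]_+$ at positions $i\neq k$, and $F$ is the $n\times n$ identity with $k$-th row replaced by $-1$ at position $k$ and $[\varepsilon r_kb_{ki;t}]_+$ at positions $i\ne k$ (equivalently $b_{ij;t'}=-b_{ij;t}$ if $i=k$ or $j=k$, else $b_{ij;t}+r_k([-\varepsilon b_{ik;t}]_+b_{kj;t}+b_{ik;t}[\varepsilon b_{kj;t}]_+)$); here and below $\varepsilon\in\{\pm1\}$ and the results are independent of it. Let $B_t$ be the top $n\times n$ part of $\tilde B_t$. The $n\times n$ matrix $C_t=(c_{ij;t})$ is defined by $C_{t_0}=I_n$ and $c_{ij;t'}=-c_{ij;t}$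 if $j=k$, else $c_{ij;t}+r_k(c_{ik;t}[\varepsilon b_{kj;t}]_++[-\varepsilon c_{ik;t}]_+b_{kj;t})$. The $m\times m$ matrix $\tilde G_t$ with columns $\tilde{\mathbf g}_{i;t}$ is defined by $\tilde G_{t_0}=I_m$ and $\tilde{\mathbf g}_{i;t'}=\tilde{\mathbf g}_{i;t}$ for $i\ne k$, $\tilde{\mathbf g}_{k;t'}=-\tilde{\mathbf g}_{k;t}+r_k\big(\sum_{j=1}^m[-\varepsilon b_{jk;t}]_+\tilde{\mathbf g}_{j;t}-\sum_{j=1}^n[-\varepsilon c_{jk;t}]_+\mathbf b_{j;t_0}\big)$, where $\mathbf b_{j;t_0}$ is the $j$-th column of $\tilde B$. *)

(* Defs.v *)
From HB Require Import structures.
From mathcomp Require Import all_boot all_order all_algebra.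
Set Implicit Arguments. Unset Strict Implicit. Unset Printing Implicit Defensive.
Import Order.TTheory GRing.Theory Num.Theory.
Local Open Scope ring_scope.

Definition pos (x : int) : int := Num.max x 0.

Definition sgn (e : bool) : int := if e then 1 else -1.

Section Mut.
Variables (m n : nat) (hnm : (n <= m)%N) (r : 'I_n -> int).

Definition wid (k : 'I_n) : 'I_m := widen_ord hnm k.

Definition mutB (k : 'I_n) (e : bool) (B : 'M[int]_(m, n)) : 'M[int]_(m, n) :=
  \matrix_(i < m, j < n)
    if (i == wid k) || (j == k) then - B i j
    else B i j + r k * (pos (- sgn e * B i k) * B (wid k) j
                        + B i k * pos (sgn e * B (wid k) j)).

Definition mutC (k : 'I_n) (e : bool) (B : 'M[int]_(m, n)) (C : 'M[int]_n)
  : 'M[int]_n :=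
  \matrix_(i < n, j < n)
    if j == k then - C i j
    else C i j + r k * (C i k * pos (sgn e * B (wid k) j)
                        + pos (- sgn e * C i k) * B (wid k) j).

(* mutation of the extended G-matrix (columns g_i), using B_t, C_t and B_{t0} *)
Definition mutG (k : 'I_n) (e : bool) (B0 B : 'M[int]_(m, n)) (C : 'M[int]_n)
  (G : 'M[int]_m) : 'M[int]_m :=
  \matrix_(i < m, j < m)
    if j == wid k then
      - G i (wid k)
      + r k * (\sum_(l < m) pos (- sgn e * B l k) * G i l
               - \sum_(l < n) pos (- sgn e * C l k) * B0 i l)
    else G i j.

Definition mutStep (B0 : 'M[int]_(m, n))
  (s : 'M[int]_(m, n) * 'M[int]_n * 'M[int]_m) (ke : 'I_n * bool) :=
  let: (B, C, G) := s in
  let: (k, e) := ke in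
  (mutB k e B, mutC k e B C, mutG k e B0 B C G).

(* The vertex t of T_n reached from t0 along the path whose successive edge
   labels are the first components of w; the second components are the
   signs epsilon used at each step. *)
Definition seedAt (B0 : 'M[int]_(m, n)) (w : seq ('I_n * bool)) :=
  foldl (mutStep B0) (B0, 1%:M, 1%:M) w.

End Mut.

(* w encodes a path from the root in the n-regular tree: no two consecutive
   edges carry the same label (otherwise one walks back). *)
Definition reduced_word (n : nat) (w : seq ('I_n * bool)) : bool :=
  sorted (fun a b => a.1 != b.1) w.

Definition Bmat n m hnm r B0 w := (@seedAt m n hnm r B0 w).1.1.
Definition Cmat n m hnm r B0 w := (@seedAt m n hnm r B0 w).1.2.
Definition Gmat n m hnm r B0 w := (@seedAt m n hnm r B0 w).2.

(* Main.v *)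
Require Import Defs.
From mathcomp Require Import all_boot all_order all_algebra.
From mathcomp Require Import ring lra.
Import Order.TTheory GRing.Theory Num.Theory.
Local Open Scope ring_scope.

Lemma pos_scale (d x : int) : 0 < d -> d * pos x = pos (d * x).
Proof. by move=> hd; rewrite /pos maxr_pMr ?mulr0 // ltW. Qed.

Lemma wid_eq m n (hnm : (n <= m)%N) (i k : 'I_n) :
  (wid hnm i == wid hnm k) = (i == k).
Proof.
apply/eqP/eqP => [h|->//]; apply/val_inj; exact: (congr1 val h).
Qed.

Lemma sum_neq m (p : 'I_m) (F : 'I_m -> int) :
  \sum_(l | l != p) F l = \sum_l F l - F p.
Proof. by rewrite [in RHS](bigD1 p) //= addrC addrK. Qed.

Section Step.
Variables (m n : nat) (hnm : (n <= m)%N) (r : 'I_n -> int) (d : 'I_n -> int).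
Hypothesis hd : forall i, 0 < d i.
Variables (B0 B : 'M[int]_(m, n)) (C : 'M[int]_n) (G : 'M[int]_m).
Hypothesis hGB : G *m B = B0 *m C.
Hypothesis hsk : forall i j : 'I_n,
  d i * B (wid hnm i) j = - (d j * B (wid hnm j) i).

Lemma diag0 k : B (wid hnm k) k = 0.
Proof.
have h := hsk k k.
have : d k * B (wid hnm k) k = 0 by move: h; lra.
by move/eqP; rewrite mulf_eq0 gt_eqF ?hd //= => /eqP.
Qed.

Lemma skew_step k e : forall i j : 'I_n,
  d i * mutB hnm r k e B (wid hnm i) j
  = - (d j * mutB hnm r k e B (wid hnm j) i).
Proof.
move=> i j; rewrite !mxE !wid_eq.
case: (eqVneq i k) => [->|hik] /=.
  by rewrite orbT !mulrN hsk.
case: (eqVneq j k) => [->|hjk] /=.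
  by rewrite !mulrN hsk.
set s := sgn e.
have h1 : d i * pos (- s * B (wid hnm i) k) = d k * pos (s * B (wid hnm k) i).
  rewrite !pos_scale //; congr pos.
  have -> : d i * (- s * B (wid hnm i) k) = - s * (d i * B (wid hnm i) k) by ring.
  rewrite hsk; ring.
have h2 : d j * pos (- s * B (wid hnm j) k) = d k * pos (s * B (wid hnm k) j).
  rewrite !pos_scale //; congr pos.
  have -> : d j * (- s * B (wid hnm j) k) = - s * (d j * B (wid hnm j) k) by ring.
  rewrite hsk; ring.
have h3 := hsk i k. have h4 := hsk j k. have h5 := hsk i j.
set bij := B (wid hnm i) j in h5 *. set bji := B (wid hnm j) i in h5 *.
set bik := B (wid hnm i) k in h1 h3 *. set bjk := B (wid hnm j) k in h2 h4 *.
set bki := B (wid hnm k) i in h1 h3 *. set bkj := B (wid hnm k) j in h2 h4 *.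
have -> : d i * (bij + r k * (pos (- s * bik) * bkj + bik * pos (s * bkj)))
  = d i * bij + r k * ((d i * pos (- s * bik)) * bkj + (d i * bik) * pos (s * bkj)) by ring.
have -> : d j * (bji + r k * (pos (- s * bjk) * bki + bjk * pos (s * bki)))
  = d j * bji + r k * ((d j * pos (- s * bjk)) * bki + (d j * bjk) * pos (s * bki)) by ring.
rewrite h1 h2 h3 h4 h5; ring.
Qed.

Lemma GB_step k e :
  mutG hnm r k e B0 B C G *m mutB hnm r k e B
  = B0 *m mutC hnm r k e B C.
Proof.
apply/matrixP => i j; rewrite !mxE.
set p := wid hnm k.
have hpk : B p k = 0 := diag0 k.
have hGBe : forall j, \sum_l G i l * B l j = \sum_l B0 i l * C l j.
  by move=> j'; move/matrixP: hGB => /(_ i j'); rewrite !mxE.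
rewrite (bigD1 p) //=.
rewrite !mxE eqxx /=.
set Gp := (- G i p + _).
case: (eqVneq j k) => [->|hjk] /=.
  rewrite hpk oppr0 mulr0 add0r.
  under eq_bigr => l hl do rewrite !mxE (negbTE hl) eqxx orbT.
  under [in RHS]eq_bigr => l _ do rewrite !mxE eqxx.
  rewrite sum_neq hpk mulr0 subr0.
  have := hGBe k.
  have -> : \sum_l G i l * - B l k = - \sum_l G i l * B l k.
    by rewrite -sumrN; apply: eq_bigr => l _; ring.
  have -> : \sum_l B0 i l * - C l k = - \sum_l B0 i l * C l k.
    by rewrite -sumrN; apply: eq_bigr => l _; ring.
  by move=> ->.
  idtac.
  under eq_bigr => l hl do rewrite !mxE (negbTE hl) (negbTE hjk) /=.
  under [in RHS]eq_bigr => l _ do rewrite !mxE (negbTE hjk).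
  rewrite sum_neq hpk mulr0 /=.
  set x := B p j. set y := pos (sgn e * x).
  have -> : \sum_l G i l * (B l j + r k * (pos (- sgn e * B l k) * x + B l k * y))
     = \sum_l G i l * B l j + r k * x * \sum_l pos (- sgn e * B l k) * G i l
       + r k * y * \sum_l G i l * B l k.
    rewrite !mulr_sumr -!big_split /=; apply: eq_bigr => l _; ring.
  have -> : \sum_l B0 i l * (C l j + r k * (C l k * y + pos (- sgn e * C l k) * x))
     = \sum_l B0 i l * C l j + r k * y * \sum_l B0 i l * C l k
       + r k * x * \sum_l pos (- sgn e * C l k) * B0 i l.
    rewrite !mulr_sumr -!big_split /=; apply: eq_bigr => l _; ring.
  rewrite !hGBe /Gp.
  have -> : pos 0 = 0 by rewrite /pos maxxx.
  ring.
Qed.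

End Step.

Theorem mainTheorem7 (m n : nat) (hn : (1 <= n)%N) (hnm : (n <= m)%N)
  (r : 'I_n -> int) (hr : forall i, 0 < r i)
  (B0 : 'M[int]_(m, n))
  (hskew : exists d : 'I_n -> int, (forall i, 0 < d i) /\
             forall i j : 'I_n, d i * B0 (widen_ord hnm i) j
                                = - (d j * B0 (widen_ord hnm j) i))
  (w : seq ('I_n * bool)) (hw : reduced_word w) :
  Gmat hnm r B0 w *m Bmat hnm r B0 w = B0 *m Cmat hnm r B0 w.
Proof.
case: hskew => d [hd hsk0].
suff : (seedAt hnm r B0 w).2 *m (seedAt hnm r B0 w).1.1
         = B0 *m (seedAt hnm r B0 w).1.2 /\
       forall i j : 'I_n, d i * (seedAt hnm r B0 w).1.1 (wid hnm i) j
          = - (d j * (seedAt hnm r B0 w).1.1 (wid hnm j) i).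
  by case.
clear hw.
elim/last_ind: w => [|w [k e] [IH1 IH2]].
  by rewrite /= mul1mx mulmx1; split => //.
rewrite /seedAt foldl_rcons -/(seedAt hnm r B0 w).
move: IH1 IH2; case: (seedAt hnm r B0 w) => [[B C] G] /= IH1 IH2.
split; first exact: (@GB_step m n hnm r d hd B0 B C G IH1 IH2 k e).
exact: (@skew_step m n hnm r d hd B IH2 k e).
Qed.
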